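(* Let $\mathcal{K}$ be a tame knot class in $\mathbb{R}^3$, $\gamma\in\mathcal{C}(\mathcal{K})\cap C^{1,1}(\mathbb{S}_1,\mathbb{R}^3)$, and $p_n\in\mathcal{P}_n$ with $p_n\to\gamma$ in $W^{1,\infty}(\mathbb{S}_1,\mathbb{R}^3)$. Let $s_n\ne t_n$ be parameters with $s_n\to s$, $t_n\to t$, $s\ne t$, such that $(p_n(s_n),p_n(t_n))\in\mathrm{dcrit}(p_n)$ for all $n$. Then $(\gamma(s),\gamma(t))\in\mathrm{dcrit}(\gamma)$.
   Context: $\mathbb{S}_1=\mathbb{R}/\mathbb{Z}$. $\mathcal{C}$ is the set of $\gamma\in W^{1,\infty}(\mathbb{S}_1,\mathbb{R}^3)$ with $|\gamma'|=1$ a.e.; $C^{1,1}$ means $\gamma'$ Lipschitz. $\mathcal{P}_n\subset\mathcal{C}$ is the set of arc length parametrisations of closed equilateral polygons with $n$ edges. For $p\in\mathcal{P}_n$, $\mathrm{dcrit}(p)$ is the set of pairs of distinct points $x=p(t)$, $y=p(s)$ with $s$ a local extremum of $u\mapsto|p(t)-p(u)|^2$ and $t$ a local extremum of $v\mapsto|p(v)-p(s)|^2$. For $\gamma\in\mathcal{C}\cap C^{1}$, $\mathrm{dcrit}(\gamma)$ is the set of pairs $(\gamma(t),\gamma(s))$ of distinct points with $\langle\gamma'(t),\gamma(t)-\gamma(s)\rangle=\langle\gamma'(s),\gamma(t)-\gamma(s)\rangle=0$. A tame knot class $\mathcal{K}$ is an ambient isotopy class of tame knots in $\mathbb{R}^3$;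 $\mathcal{C}(\mathcal{K})$ is the set of injective $\gamma\in\mathcal{C}$ whose image is a knot in $\mathcal{K}$. *)

(* Defs.v *)
From Stdlib Require Import Reals.
Open Scope R_scope.

Definition R3 : Type := (R * R * R)%type.
Definition c1 (v : R3) : R := fst (fst v).
Definition c2 (v : R3) : R := snd (fst v).
Definition c3 (v : R3) : R := snd v.
Definition vadd (u v : R3) : R3 := (c1 u + c1 v, c2 u + c2 v, c3 u + c3 v).
Definition vsub (u v : R3) : R3 := (c1 u - c1 v, c2 u - c2 v, c3 u - c3 v).
Definition vscale (a : R) (v : R3) : R3 := (a * c1 v, a * c2 v, a * c3 v).
Definition dot (u v : R3) : R := c1 u * c1 v + c2 u * c2 v + c3 u * c3 v.
Definition sqnorm (v : R3) : R := dot v v.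
Definition norm (v : R3) : R := sqrt (sqnorm v).

(** Curves [S_1 -> R^3] are represented as 1-periodic maps [R -> R^3]. *)
Definition periodic1 (g : R -> R3) : Prop := forall t, g (t + 1) = g t.

(** equality / convergence in S_1 = R/Z *)
Definition eqS1 (a b : R) : Prop := exists k : Z, a - b = IZR k.
Definition convS1 (u : nat -> R) (l : R) : Prop :=
  forall eps, eps > 0 -> exists N : nat, forall n, (N <= n)%nat ->
    exists k : Z, Rabs (u n - l - IZR k) < eps.

Definition vderiv (g : R -> R3) (t : R) (a : R3) : Prop :=
  derivable_pt_lim (fun u => c1 (g u)) t (c1 a) /\
  derivable_pt_lim (fun u => c2 (g u)) t (c2 a) /\
  derivable_pt_lim (fun u => c3 (g u)) t (c3 a).

Definition null_set (Z : R -> Prop) : Prop :=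
  forall eps, eps > 0 -> exists l r : nat -> R,
    (forall i, l i <= r i) /\
    (forall x, Z x -> exists i, l i < x < r i) /\
    (forall N, sum_f_R0 (fun i => r i - l i) N < eps).

Definition lipschitz (g : R -> R3) : Prop :=
  exists L, forall a b, norm (vsub (g a) (g b)) <= L * Rabs (a - b).

(** The class C: W^{1,infty}(S_1,R^3) (= Lipschitz, 1-periodic) with |g'| = 1 a.e. *)
Definition in_C (g : R -> R3) : Prop :=
  periodic1 g /\ lipschitz g /\
  exists Z, null_set Z /\
    forall t, ~ Z t -> exists a, vderiv g t a /\ norm a = 1.

Definition C11 (g : R -> R3) : Prop :=
  exists g' : R -> R3, (forall t, vderiv g t (g' t)) /\
    exists L, forall a b, norm (vsub (g' a) (g' b)) <= L * Rabs (a - b).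

(** P_n: arc-length parametrisations of closed equilateral polygons with n
    edges: affine (with speed 1) on each interval [a + k/n, a + (k+1)/n]. *)
Definition in_P (n : nat) (p : R -> R3) : Prop :=
  in_C p /\ (0 < n)%nat /\
  exists a : R, forall k : Z,
    let t0 := a + IZR k / INR n in
    let t1 := a + (IZR k + 1) / INR n in
    norm (vsub (p t1) (p t0)) = / INR n /\
    forall tau, 0 <= tau <= / INR n ->
      p (t0 + tau) = vadd (p t0) (vscale (INR n * tau) (vsub (p t1) (p t0))).

Definition loc_extremum (f : R -> R) (s : R) : Prop :=
  exists del, del > 0 /\
    ((forall u, Rabs (u - s) < del -> f u <= f s) \/
     (forall u, Rabs (u - s) < del -> f s <= f u)).

Definition dcrit_P (p : R -> R3) (x y : R3) : Prop :=
  x <> y /\ exists t s, x = p t /\ y = p s /\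
    loc_extremum (fun u => sqnorm (vsub (p t) (p u))) s /\
    loc_extremum (fun v => sqnorm (vsub (p v) (p s))) t.

Definition dcrit_C1 (g : R -> R3) (x y : R3) : Prop :=
  exists t s a b, x = g t /\ y = g s /\ x <> y /\
    vderiv g t a /\ vderiv g s b /\
    dot a (vsub x y) = 0 /\ dot b (vsub x y) = 0.

Definition W1inf_conv (p : nat -> R -> R3) (g : R -> R3) : Prop :=
  forall eps, eps > 0 -> exists N : nat, forall n, (N <= n)%nat ->
    (forall t, norm (vsub (p n t) (g t)) <= eps) /\
    exists Z, null_set Z /\ forall t, ~ Z t ->
      exists a b, vderiv (p n) t a /\ vderiv g t b /\ norm (vsub a b) <= eps.

Definition cont3 (f : R3 -> R3) (x : R3) : Prop :=
  forall eps, eps > 0 -> exists del, del > 0 /\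
    forall y, norm (vsub y x) < del -> norm (vsub (f y) (f x)) < eps.

Definition homeo (f : R3 -> R3) : Prop :=
  exists h : R3 -> R3, (forall x, h (f x) = x) /\ (forall y, f (h y) = y) /\
    (forall x, cont3 f x) /\ (forall y, cont3 h y).

Definition ambient_isotopy (H : R -> R3 -> R3) : Prop :=
  (forall x, H 0 x = x) /\
  (forall t, 0 <= t <= 1 -> homeo (H t)) /\
  (forall t x, 0 <= t <= 1 -> forall eps, eps > 0 -> exists del, del > 0 /\
     forall t' x', 0 <= t' <= 1 -> Rabs (t' - t) < del -> norm (vsub x' x) < del ->
       norm (vsub (H t' x') (H t x)) < eps).

Definition amb_isotopic (A B : R3 -> Prop) : Prop :=
  exists H, ambient_isotopy H /\ forall y, B y <-> exists x, A x /\ y = H 1 x.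

Definition image (g : R -> R3) : R3 -> Prop := fun y => exists t, y = g t.

Definition injS1 (g : R -> R3) : Prop := forall a b, g a = g b -> eqS1 a b.

Definition cont_curve (g : R -> R3) : Prop :=
  forall t eps, eps > 0 -> exists del, del > 0 /\
    forall u, Rabs (u - t) < del -> norm (vsub (g u) (g t)) < eps.

Definition knot (A : R3 -> Prop) : Prop :=
  exists g, cont_curve g /\ periodic1 g /\ injS1 g /\
    forall y, A y <-> image g y.

Definition polygonal_knot (A : R3 -> Prop) : Prop :=
  knot A /\ exists (m : nat) (v : nat -> R3), v m = v O /\
    forall y, A y <-> exists i, (i < m)%nat /\ exists tau, 0 <= tau <= 1 /\
      y = vadd (v i) (vscale tau (vsub (v (S i)) (v i))).

Definition tame_knot (A : R3 -> Prop) : Prop :=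
  knot A /\ exists P, polygonal_knot P /\ amb_isotopic P A.

Definition tame_knot_class (K : (R3 -> Prop) -> Prop) : Prop :=
  exists A0, tame_knot A0 /\ forall B, K B <-> (knot B /\ amb_isotopic A0 B).

Definition in_CK (K : (R3 -> Prop) -> Prop) (g : R -> R3) : Prop :=
  in_C g /\ injS1 g /\ K (image g).

(* Main.v *)
From Pilot Require Import Defs.
From Stdlib Require Import Reals Lra Lia List ZArith.
Open Scope R_scope.
Import Pilot.Defs.

Lemma comp_le_norm1 v : Rabs (c1 v) <= norm v.
Proof. unfold norm, sqnorm, dot. rewrite <- sqrt_Rsqr_abs. apply sqrt_le_1_alt.
unfold Rsqr. nra. Qed.
Lemma comp_le_norm2 v : Rabs (c2 v) <= norm v.
Proof. unfold norm, sqnorm, dot. rewrite <- sqrt_Rsqr_abs. apply sqrt_le_1_alt.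
unfold Rsqr. nra. Qed.
Lemma comp_le_norm3 v : Rabs (c3 v) <= norm v.
Proof. unfold norm, sqnorm, dot. rewrite <- sqrt_Rsqr_abs. apply sqrt_le_1_alt.
unfold Rsqr. nra. Qed.

Lemma R3_eq (u v : R3) : c1 u = c1 v -> c2 u = c2 v -> c3 u = c3 v -> u = v.
Proof. destruct u as [[u1 u2] u3], v as [[v1 v2] v3]; unfold c1,c2,c3; simpl.
intros -> -> ->; reflexivity. Qed.

Lemma periodic_nat g : periodic1 g -> forall x n, g (x + INR n) = g x.
Proof. intros Hg x n; induction n as [|n IH].
- simpl; rewrite Rplus_0_r; reflexivity.
- rewrite S_INR. replace (x + (INR n + 1)) with ((x + INR n) + 1) by ring.
  rewrite Hg; exact IH. Qed.

Lemma periodic_Z g : periodic1 g -> forall x k, g (x + IZR k) = g x.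
Proof. intros Hg x k. destruct (Z_le_gt_dec 0%Z k) as [Hk|Hk].
- replace k with (Z.of_nat (Z.to_nat k)) by lia. rewrite <- INR_IZR_INZ.
  apply periodic_nat; auto.
- replace k with (- Z.of_nat (Z.to_nat (-k)))%Z by lia. rewrite opp_IZR, <- INR_IZR_INZ.
  rewrite <- (periodic_nat g Hg (x + - INR (Z.to_nat (-k))) (Z.to_nat (-k))).
  f_equal; ring. Qed.

Lemma cont_eps f x : continuity_pt f x -> forall eps, eps > 0 ->
  exists del, del > 0 /\ forall u, Rabs (u - x) < del -> Rabs (f u - f x) < eps.
Proof. intros H eps He. destruct (H eps He) as [alp [Ha Hb]].
exists alp; split; auto. intros u Hu. destruct (Req_dec x u) as [<-|Hne].
- rewrite Rminus_diag, Rabs_R0; lra.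
- apply (Hb u). split. split; [exact I|exact Hne]. exact Hu. Qed.

Lemma deriv_cont f x l : derivable_pt_lim f x l -> continuity_pt f x.
Proof. intro H. apply derivable_continuous_pt. exists l; exact H. Qed.

Lemma deriv_affine_loc (f : R -> R) x l A B lo hi : lo < x < hi ->
  (forall y, lo < y < hi -> f y = A + y * B) -> derivable_pt_lim f x l -> l = B.
Proof. intros Hx Hf Hd. destruct (Req_dec l B) as [E|Hne]; auto. exfalso.
assert (He : 0 < Rabs (l - B)) by (apply Rabs_pos_lt; lra).
destruct (Hd _ He) as [del Hdel].
set (h := Rmin (del/2) (Rmin ((hi - x)/2) ((x-lo)/2))).
assert (h1 : 0 < h). { unfold h. pose proof (cond_pos del). repeat apply Rmin_pos; lra. }
assert (h2 : h <= del/2) by apply Rmin_l.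
assert (h3 : h <= (hi-x)/2) by (unfold h; eapply Rle_trans; [apply Rmin_r|apply Rmin_l]).
pose proof (cond_pos del) as Hdp.
assert (Hh := Hdel h ltac:(lra) ltac:(rewrite Rabs_right; lra)).
rewrite (Hf (x+h)) in Hh by lra. rewrite (Hf x) in Hh by lra.
replace ((A + (x + h) * B - (A + x * B)) / h) with B in Hh by (field; lra).
rewrite <- Rabs_Ropp in Hh. replace (- (B - l)) with (l - B) in Hh by ring. lra. Qed.
Section Cov.
Variables l r : nat -> R.
Hypothesis Hlr : forall i, l i <= r i.
Fixpoint lsum (L : list nat) : R := match L with nil => 0 | i :: t => (r i - l i) + lsum t end.
Lemma lsum_nonneg L : 0 <= lsum L.
Proof. induction L; simpl; [lra|]. pose proof (Hlr a); lra. Qed.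
Lemma lsum_app L1 L2 : lsum (L1 ++ L2) = lsum L1 + lsum L2.
Proof. induction L1; simpl; [ring|]. rewrite IHL1; ring. Qed.
Lemma cover_sum_n n : forall L a b, (length L <= n)%nat ->
  (forall x, a <= x <= b -> exists i, In i L /\ l i < x < r i) -> b - a <= lsum L.
Proof. induction n as [|n IH]; intros L a b HL Hc.
- destruct L; [|simpl in HL; lia]. destruct (Rle_dec a b) as [Hab|Hab].
  + destruct (Hc a) as [i [[] _]]; lra.
  + simpl; lra.
- destruct (Rle_dec a b) as [Hab|Hab]; [|pose proof (lsum_nonneg L); lra].
  destruct (Hc b) as [j [Hj Hjb]]; [lra|].
  destruct (in_split _ _ Hj) as [L1 [L2 E]]. subst L.
  assert (Es : lsum (L1 ++ j :: L2) = lsum (L1 ++ L2) + (r j - l j)).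
  { rewrite !lsum_app; simpl; ring. }
  rewrite Es. pose proof (lsum_nonneg (L1 ++ L2)).
  destruct (Rlt_dec (l j) a) as [Hla|Hla]; [lra|].
  assert (IH' : l j - a <= lsum (L1 ++ L2)).
  { apply IH. rewrite length_app in *; simpl in HL; lia.
    intros x Hx. destruct (Hc x) as [i [Hi Hix]]; [lra|].
    exists i; split; [|exact Hix].
    apply in_app_or in Hi. apply in_or_app. destruct Hi as [Hi|[Hi|Hi]]; auto.
    subst i; lra. }
  lra. Qed.
Lemma lsum_seq N : lsum (seq 0 (S N)) = sum_f_R0 (fun i => r i - l i) N.
Proof. induction N. simpl; ring. rewrite seq_S, lsum_app, IHN. simpl. ring. Qed.
End Cov.

Lemma list_bound (lst : list R) : exists N : nat, forall y, In y lst -> y <= INR N.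
Proof. induction lst as [|y t [N HN]]. exists O; intros y [].
exists (Nat.max N (Z.to_nat (up y))). intros z [<-|Hz].
- apply Rle_trans with (INR (Z.to_nat (up y))); [|apply le_INR; lia].
  destruct (archimed y) as [H1 H2]. destruct (Z_le_gt_dec 0%Z (up y)).
  + rewrite INR_IZR_INZ, Z2Nat.id by lia. lra.
  + assert (g2 : (up y < 0)%Z) by lia. apply IZR_lt in g2. pose proof (pos_INR (Z.to_nat (up y))). simpl in g2. lra.
- apply Rle_trans with (INR N); [auto|apply le_INR; lia]. Qed.

Lemma hb (l r : nat -> R) a b : (forall x, a <= x <= b -> exists i, l i < x < r i) ->
  exists N : nat, forall x, a <= x <= b -> exists i, (i <= N)%nat /\ l i < x < r i.
Proof. intro Hc.
set (fam := mkfamily (fun x => exists i : nat, x = INR i)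
   (fun x y => exists i : nat, x = INR i /\ l i < y < r i)
   (fun x Hx => match Hx with ex_intro _ y (ex_intro _ i (conj E _)) => ex_intro _ i E end)).
destruct (compact_P3 a b fam) as [D [Hcov Hfin]].
- split.
  + intros x Hx. destruct (Hc x Hx) as [i Hi]. exists (INR i). simpl. exists i; auto.
  + intros x y Hy. simpl in Hy. destruct Hy as [i [E Hi]].
    assert (Hp : 0 < Rmin (y - l i) (r i - y)) by (apply Rmin_pos; lra).
    exists (mkposreal _ Hp). intros z Hz. unfold disc in Hz; simpl in Hz.
    exists i; split; auto.
    pose proof (Rmin_l (y - l i) (r i - y)). pose proof (Rmin_r (y - l i) (r i - y)).
    apply Rabs_def2 in Hz. lra.
- destruct Hfin as [lst Hlst]. destruct (list_bound lst) as [N HN].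
  exists N. intros x Hx. destruct (Hcov x Hx) as [y [[i [E Hi]] Dy]].
  exists i; split; auto.
  assert (Iy : In y lst). { apply Hlst. split; [exists i; auto|exact Dy]. }
  apply HN in Iy. subst y. apply INR_le in Iy. exact Iy. Qed.

Lemma nonnull_pt Z a b : null_set Z -> a < b -> exists x, a < x < b /\ ~ Z x.
Proof. intros HZ Hab. destruct (Classical_Prop.classic (exists x, a < x < b /\ ~ Z x)) as [H|H]; auto.
exfalso. destruct (HZ ((b - a)/2) ltac:(lra)) as [l [r [Hlr [Hc Hs]]]].
destruct (hb l r (a + (b-a)/4) (b - (b-a)/4)) as [N HN].
{ intros x Hx. apply Hc. destruct (Classical_Prop.classic (Z x)) as [Hz|Hz]; auto.
  exfalso; apply H; exists x; split; [lra|auto]. }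
assert (Hle := cover_sum_n l r Hlr (length (seq 0 (S N))) (seq 0 (S N)) (a + (b-a)/4) (b - (b-a)/4) (le_n _)).
rewrite lsum_seq in Hle. specialize (Hs N).
assert (b - (b - a) / 4 - (a + (b - a) / 4) <= sum_f_R0 (fun i : nat => r i - l i) N).
{ apply Hle. intros x Hx. destruct (HN x Hx) as [i [Hi Hx']]. exists i; split; auto.
  apply in_seq; lia. }
lra. Qed.
Lemma small_pos x q rho : 0 < rho -> 0 <= q -> (forall tau, 0 < tau < rho -> x <= tau * q) -> x <= 0.
Proof. intros Hr Hq H. destruct (Rle_dec x 0) as [|Hx]; auto. exfalso.
set (t := Rmin (rho/2) (x / (2*(q+1)))).
assert (t1 : 0 < t) by (unfold t; apply Rmin_pos; [lra| apply Rdiv_lt_0_compat; lra]).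
assert (t2 : t <= rho/2) by apply Rmin_l.
assert (t3 : t <= x / (2*(q+1))) by apply Rmin_r.
assert (t4 : t * (2 * (q+1)) <= x).
{ apply Rmult_le_compat_r with (r := 2*(q+1)) in t3; [|lra].
  replace (x / (2 * (q + 1)) * (2 * (q + 1))) with x in t3 by (field; lra). exact t3. }
specialize (H t ltac:(lra)). nra. Qed.

Lemma sq_plus c P e tau : sqnorm (vsub c (vadd P (vscale tau e))) =
  sqnorm (vsub c P) - 2 * tau * dot (vsub c P) e + tau * tau * sqnorm e.
Proof. unfold sqnorm, dot, vsub, vadd, vscale, c1, c2, c3; simpl; ring. Qed.
Lemma sq_minus c P e tau : sqnorm (vsub c (vsub P (vscale tau e))) =
  sqnorm (vsub c P) + 2 * tau * dot (vsub c P) e + tau * tau * sqnorm e.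
Proof. unfold sqnorm, dot, vsub, vadd, vscale, c1, c2, c3; simpl; ring. Qed.
Lemma sqnorm_nonneg e : 0 <= sqnorm e.
Proof. unfold sqnorm, dot. nra. Qed.

Lemma sign_lemma p c s h ep em : 0 < h ->
  (forall tau, s <= tau < s + h -> p tau = vadd (p s) (vscale (tau - s) ep)) ->
  (forall tau, s - h < tau <= s -> p tau = vsub (p s) (vscale (s - tau) em)) ->
  loc_extremum (fun u => sqnorm (vsub c (p u))) s ->
  dot (vsub c (p s)) ep * dot (vsub c (p s)) em <= 0.
Proof. intros Hh Hp Hm [del [Hdel Hext]].
set (d := vsub c (p s)). pose proof (sqnorm_nonneg ep). pose proof (sqnorm_nonneg em).
set (rho := Rmin h del).
assert (Hr : 0 < rho) by (apply Rmin_pos; lra).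
assert (Hr1 : rho <= h) by apply Rmin_l. assert (Hr2 : rho <= del) by apply Rmin_r.
assert (Rp : forall tau, 0 < tau < rho -> sqnorm (vsub c (p (s + tau))) =
   sqnorm d - 2 * tau * dot d ep + tau * tau * sqnorm ep).
{ intros tau Ht. rewrite Hp by lra. replace (s + tau - s) with tau by ring. apply sq_plus. }
assert (Rm : forall tau, 0 < tau < rho -> sqnorm (vsub c (p (s - tau))) =
   sqnorm d + 2 * tau * dot d em + tau * tau * sqnorm em).
{ intros tau Ht. rewrite Hm by lra. replace (s - (s - tau)) with tau by ring. apply sq_minus. }
assert (Ap : forall tau, 0 < tau < rho -> Rabs (s + tau - s) < del).
{ intros tau Ht. replace (s + tau - s) with tau by ring. rewrite Rabs_right; lra. }
assert (Am : forall tau, 0 < tau < rho -> Rabs (s - tau - s) < del).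
{ intros tau Ht. replace (s - tau - s) with (- tau) by ring. rewrite Rabs_Ropp, Rabs_right; lra. }
destruct Hext as [Hmax|Hmin].
- assert (H1 : 0 <= dot d ep).
  { assert (Ht : 0 < rho/2 < rho) by lra.
    specialize (Hmax _ (Ap _ Ht)). simpl in Hmax. rewrite (Rp _ Ht) in Hmax. fold d in Hmax. nra. }
  assert (H2 : dot d em <= 0).
  { assert (Ht : 0 < rho/2 < rho) by lra.
    specialize (Hmax _ (Am _ Ht)). simpl in Hmax. rewrite (Rm _ Ht) in Hmax. fold d in Hmax. nra. }
  nra.
- assert (H1 : dot d ep <= 0).
  { apply (small_pos _ (sqnorm ep / 2) rho); [lra|lra|]. intros tau Ht.
    specialize (Hmin _ (Ap _ Ht)). simpl in Hmin. rewrite (Rp _ Ht) in Hmin. fold d in Hmin. nra. }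
  assert (H2 : - dot d em <= 0).
  { apply (small_pos _ (sqnorm em / 2) rho); [lra|lra|]. intros tau Ht.
    specialize (Hmin _ (Am _ Ht)). simpl in Hmin. rewrite (Rm _ Ht) in Hmin. fold d in Hmin. nra. }
  nra. Qed.
Lemma geom n p s : in_P n p -> exists h ep em, 0 < h /\ h <= / INR n /\
  (forall tau, s <= tau < s + h -> p tau = vadd (p s) (vscale (tau - s) ep)) /\
  (forall tau, s - h < tau <= s -> p tau = vsub (p s) (vscale (s - tau) em)).
Proof. intros [_ [Hn [a0 Hed]]].
assert (Hn0 : 0 < INR n) by (apply lt_0_INR; exact Hn).
set (x := INR n * (s - a0)).
destruct (archimed x) as [A1 A2].
set (k := (up x - 1)%Z).
assert (Kk : IZR k = IZR (up x) - 1) by (unfold k; rewrite minus_IZR; reflexivity).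
set (K := IZR k) in *.
assert (HT0 : a0 + K / INR n <= s).
{ assert (K <= x) by lra. unfold x in H.
  apply Rmult_le_compat_r with (r := / INR n) in H; [|left; apply Rinv_0_lt_compat; lra].
  replace (INR n * (s - a0) * / INR n) with (s - a0) in H by (field; lra). unfold Rdiv. lra. }
assert (HT1 : s < a0 + (K + 1) / INR n).
{ assert (x < K + 1) by lra. unfold x in H.
  apply Rmult_lt_compat_r with (r := / INR n) in H; [|apply Rinv_0_lt_compat; lra].
  replace (INR n * (s - a0) * / INR n) with (s - a0) in H by (field; lra). unfold Rdiv. lra. }
assert (Hlen : a0 + (K + 1) / INR n - (a0 + K / INR n) = / INR n) by (field; lra).
destruct (Hed k) as [_ Hedk]. fold K in Hedk. cbv zeta in Hedk.
set (T0 := a0 + K / INR n) in *. set (T1 := a0 + (K + 1) / INR n) in *.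
set (V := vsub (p T1) (p T0)) in *.
set (ep := vscale (INR n) V).
assert (Aff : forall tau, T0 <= tau <= T1 -> p tau = vadd (p T0) (vscale (INR n * (tau - T0)) V)).
{ intros tau Ht. replace tau with (T0 + (tau - T0)) at 1 by ring. apply Hedk. lra. }
assert (Right : forall h, h <= T1 - s -> forall tau, s <= tau < s + h -> p tau = vadd (p s) (vscale (tau - s) ep)).
{ intros h Hh tau Ht. rewrite (Aff tau) by lra. rewrite (Aff s) by lra.
  unfold ep; apply R3_eq; unfold vadd, vscale, c1, c2, c3; simpl; ring. }
destruct (Rlt_dec T0 s) as [Hlt|Hge].
- set (h := Rmin (T1 - s) (s - T0)).
  assert (h1 : h <= T1 - s) by apply Rmin_l. assert (h2 : h <= s - T0) by apply Rmin_r.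
  exists h, ep, ep. split; [apply Rmin_pos; lra|]. split; [lra|]. split; [apply Right; auto|].
  intros tau Ht. rewrite (Aff tau) by lra. rewrite (Aff s) by lra.
  unfold ep; apply R3_eq; unfold vadd, vsub, vscale, c1, c2, c3; simpl; ring.
- assert (Es : s = T0) by lra.
  destruct (Hed (k - 1)%Z) as [_ Hedk']. cbv zeta in Hedk'. rewrite minus_IZR in Hedk'. fold K in Hedk'.
  replace (a0 + (K - 1 + 1) / INR n) with T0 in Hedk' by (unfold T0; field; lra).
  set (T0' := a0 + (K - 1) / INR n) in *.
  assert (E' : T0 - T0' = / INR n) by (unfold T0, T0'; field; lra).
  set (em := vscale (INR n) (vsub (p T0) (p T0'))).
  set (h := Rmin (T1 - s) (/ INR n)).
  assert (h1 : h <= T1 - s) by apply Rmin_l. assert (h2 : h <= / INR n) by apply Rmin_r.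
  exists h, ep, em. split; [apply Rmin_pos; [lra|apply Rinv_0_lt_compat; lra]|]. split; [lra|].
  split; [apply Right; auto|].
  intros tau Ht. replace tau with (T0' + (tau - T0')) at 1 by ring. rewrite Hedk' by lra.
  rewrite Es. unfold em; apply R3_eq; unfold vadd, vsub, vscale, c1, c2, c3; simpl.
  all: replace (T0 - tau) with (/ INR n - (tau - T0')) by lra; field; lra.
Qed.
Lemma g_cont g g' : (forall t, vderiv g t (g' t)) -> forall x eps, eps > 0 ->
  exists del, del > 0 /\ forall u, Rabs (u - x) < del ->
   Rabs (c1 (g u) - c1 (g x)) < eps /\ Rabs (c2 (g u) - c2 (g x)) < eps /\ Rabs (c3 (g u) - c3 (g x)) < eps.
Proof. intros Hd x eps He. destruct (Hd x) as [D1 [D2 D3]].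
destruct (cont_eps _ _ (deriv_cont _ _ _ D1) eps He) as [d1 [P1 Q1]].
destruct (cont_eps _ _ (deriv_cont _ _ _ D2) eps He) as [d2 [P2 Q2]].
destruct (cont_eps _ _ (deriv_cont _ _ _ D3) eps He) as [d3 [P3 Q3]].
exists (Rmin d1 (Rmin d2 d3)). split. repeat apply Rmin_pos; lra.
intros u Hu. pose proof (Rmin_l d1 (Rmin d2 d3)). pose proof (Rmin_r d1 (Rmin d2 d3)).
pose proof (Rmin_l d2 d3). pose proof (Rmin_r d2 d3).
split; [apply Q1|split; [apply Q2|apply Q3]]; lra. Qed.

Definition phi (g : R -> R3) (Y u : R) : R :=
  Rabs (c1 (g u) - c1 (g Y)) + Rabs (c2 (g u) - c2 (g Y)) + Rabs (c3 (g u) - c3 (g Y)).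

Lemma abs_lip a b z : Rabs (Rabs (a - z) - Rabs (b - z)) <= Rabs (a - b).
Proof. unfold Rabs; repeat destruct Rcase_abs; lra. Qed.

Lemma phi_cont g g' Y : (forall t, vderiv g t (g' t)) -> forall c, continuity_pt (phi g Y) c.
Proof. intros Hd c eps He. destruct (g_cont g g' Hd c (eps/3)) as [del [Hdel Hu]]; [lra|].
exists del; split; auto. intros x [_ Hx]. simpl in *. unfold R_dist in *.
destruct (Hu x Hx) as [U1 [U2 U3]]. unfold phi.
pose proof (abs_lip (c1 (g x)) (c1 (g c)) (c1 (g Y))).
pose proof (abs_lip (c2 (g x)) (c2 (g c)) (c2 (g Y))).
pose proof (abs_lip (c3 (g x)) (c3 (g c)) (c3 (g Y))).
revert U1 U2 U3 H H0 H1. generalize (Rabs (c1 (g x) - c1 (g Y))) (Rabs (c2 (g x) - c2 (g Y)))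
 (Rabs (c3 (g x) - c3 (g Y))) (Rabs (c1 (g c) - c1 (g Y))) (Rabs (c2 (g c) - c2 (g Y)))
 (Rabs (c3 (g c) - c3 (g Y))) (Rabs (c1 (g x) - c1 (g c))) (Rabs (c2 (g x) - c2 (g c)))
 (Rabs (c3 (g x) - c3 (g c))). intros.
unfold Rabs in *; repeat destruct Rcase_abs; lra. Qed.

Lemma inv_cont g g' Y del : (forall t, vderiv g t (g' t)) -> periodic1 g -> injS1 g ->
  0 < del <= 1/2 -> exists m, m > 0 /\ forall u, phi g Y u < m ->
  exists k : Z, Rabs (u + IZR k - Y) < del.
Proof. intros Hd Hp Hinj Hdel.
destruct (continuity_ab_min (phi g Y) (Y + del) (Y + 1 - del)) as [Mx [Hmin HMx]]; [lra| intros; eapply phi_cont; eauto|].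
exists (phi g Y Mx). split.
- destruct (Rlt_dec 0 (phi g Y Mx)) as [|Hn]; [lra|exfalso].
  assert (E : g Mx = g Y).
  { unfold phi in Hn. pose proof (Rabs_pos (c1 (g Mx) - c1 (g Y))).
    pose proof (Rabs_pos (c2 (g Mx) - c2 (g Y))). pose proof (Rabs_pos (c3 (g Mx) - c3 (g Y))).
    apply R3_eq; [assert (Rabs (c1 (g Mx) - c1 (g Y)) = 0) by lra
      | assert (Rabs (c2 (g Mx) - c2 (g Y)) = 0) by lra
      | assert (Rabs (c3 (g Mx) - c3 (g Y)) = 0) by lra];
    match goal with H : Rabs ?a = 0 |- _ => destruct (Req_dec a 0) as [Z|Z];
      [lra| apply Rabs_no_R0 in Z; contradiction] end. }
  destruct (Hinj _ _ E) as [j Hj].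
  assert (0 < IZR j < 1) by lra. destruct H as [H1 H2]. apply lt_IZR in H1. apply lt_IZR in H2. lia.
- intros u Hu.
  destruct (archimed (u - Y - del)) as [A1 A2].
  set (j := (up (u - Y - del) - 1)%Z).
  assert (Ej : IZR j = IZR (up (u - Y - del)) - 1) by (unfold j; rewrite minus_IZR; reflexivity).
  assert (Pj : phi g Y (u + IZR (- j)) = phi g Y u) by (unfold phi; rewrite periodic_Z; auto).
  rewrite opp_IZR in Pj.
  destruct (Rle_dec (u + - IZR j) (Y + 1 - del)) as [Hle|Hgt].
  + exfalso. specialize (Hmin (u + - IZR j) ltac:(lra)). lra.
  + exists (- j - 1)%Z. rewrite minus_IZR, opp_IZR. apply Rabs_def1; lra.
Qed.

Lemma c1_vsub u v : c1 (vsub u v) = c1 u - c1 v. Proof. reflexivity. Qed.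
Lemma c2_vsub u v : c2 (vsub u v) = c2 u - c2 v. Proof. reflexivity. Qed.
Lemma c3_vsub u v : c3 (vsub u v) = c3 u - c3 v. Proof. reflexivity. Qed.

Lemma vderiv_affine p tau lo hi P s e a : lo < tau < hi ->
  (forall y, lo < y < hi -> p y = vadd P (vscale (y - s) e)) -> vderiv p tau a -> a = e.
Proof. intros Ht Hp [D1 [D2 D3]]. apply R3_eq.
- apply (deriv_affine_loc (fun u => c1 (p u)) tau _ (c1 P - s * c1 e) (c1 e) lo hi Ht); auto.
  intros y Hy. rewrite (Hp y Hy). unfold vadd, vscale, c1; simpl; ring.
- apply (deriv_affine_loc (fun u => c2 (p u)) tau _ (c2 P - s * c2 e) (c2 e) lo hi Ht); auto.
  intros y Hy. rewrite (Hp y Hy). unfold vadd, vscale, c2; simpl; ring.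
- apply (deriv_affine_loc (fun u => c3 (p u)) tau _ (c3 P - s * c3 e) (c3 e) lo hi Ht); auto.
  intros y Hy. rewrite (Hp y Hy). unfold vadd, vscale, c3; simpl; ring. Qed.

Lemma vderiv_unique g t a b : vderiv g t a -> vderiv g t b -> a = b.
Proof. intros [A1 [A2 A3]] [B1 [B2 B3]]. apply R3_eq; eapply uniqueness_limite; eauto. Qed.

Lemma mul_close x y X Y r : 0 <= r <= 1 -> Rabs (x - X) <= r -> Rabs (y - Y) <= r ->
  Rabs (x * y - X * Y) <= r * (Rabs X + Rabs Y + 1).
Proof. intros Hr Hx Hy.
replace (x * y - X * Y) with (X * (y - Y) + (x - X) * Y + (x - X) * (y - Y)) by ring.
eapply Rle_trans; [apply Rabs_triang|]. eapply Rle_trans; [apply Rplus_le_compat_r; apply Rabs_triang|].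
rewrite !Rabs_mult. pose proof (Rabs_pos X). pose proof (Rabs_pos Y).
pose proof (Rabs_pos (x - X)). pose proof (Rabs_pos (y - Y)). nra. Qed.

Lemma dot_close d e D G r : 0 <= r <= 1 ->
  Rabs (c1 d - c1 D) <= r -> Rabs (c2 d - c2 D) <= r -> Rabs (c3 d - c3 D) <= r ->
  Rabs (c1 e - c1 G) <= r -> Rabs (c2 e - c2 G) <= r -> Rabs (c3 e - c3 G) <= r ->
  Rabs (dot d e - dot D G) <= r * (Rabs (c1 D) + Rabs (c2 D) + Rabs (c3 D)
                                + Rabs (c1 G) + Rabs (c2 G) + Rabs (c3 G) + 3).
Proof. intros Hr H1 H2 H3 H4 H5 H6. unfold dot.
pose proof (mul_close _ _ _ _ _ Hr H1 H4). pose proof (mul_close _ _ _ _ _ Hr H2 H5).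
pose proof (mul_close _ _ _ _ _ Hr H3 H6).
replace (c1 d * c1 e + c2 d * c2 e + c3 d * c3 e - (c1 D * c1 G + c2 D * c2 G + c3 D * c3 G))
  with ((c1 d * c1 e - c1 D * c1 G) + (c2 d * c2 e - c2 D * c2 G) + (c3 d * c3 e - c3 D * c3 G)) by ring.
eapply Rle_trans; [apply Rabs_triang|]. eapply Rle_trans; [apply Rplus_le_compat_r; apply Rabs_triang|].
lra. Qed.

Lemma ext_shift p c b k : periodic1 p -> loc_extremum (fun u => sqnorm (vsub c (p u))) b ->
  loc_extremum (fun u => sqnorm (vsub c (p u))) (b + IZR k).
Proof. intros Hp [del [Hd H]]. exists del; split; auto.
assert (E : forall u, p u = p (u + IZR (- k))).
{ intro u. rewrite periodic_Z; auto. }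
assert (A : forall u, Rabs (u - (b + IZR k)) < del -> Rabs (u + IZR (-k) - b) < del).
{ intros u Hu. rewrite opp_IZR. replace (u + - IZR k - b) with (u - (b + IZR k)) by ring. auto. }
rewrite (E (b + IZR k)). rewrite opp_IZR. replace (b + IZR k + - IZR k) with b by ring.
destruct H as [H|H]; [left|right]; intros u Hu; rewrite (E u); apply H; apply A; auto. Qed.

Lemma abs_tri3 a b c e1 e2 e3 : Rabs a <= e1 -> Rabs b <= e2 -> Rabs c <= e3 -> Rabs (a + b + c) <= e1 + e2 + e3.
Proof. intros. eapply Rle_trans; [apply Rabs_triang|]. eapply Rle_trans; [apply Rplus_le_compat_r; apply Rabs_triang|]. lra. Qed.
Lemma abs_tri4 a b c d e1 e2 e3 e4 : Rabs a <= e1 -> Rabs b <= e2 -> Rabs c <= e3 -> Rabs d <= e4 -> Rabs (a + b + c + d) <= e1 + e2 + e3 + e4.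
Proof. intros. eapply Rle_trans; [apply Rabs_triang|]. pose proof (abs_tri3 a b c e1 e2 e3). lra. Qed.

Lemma lip_comp g' L : (forall a b, norm (vsub (g' a) (g' b)) <= L * Rabs (a - b)) ->
  forall a b, Rabs (c1 (g' a) - c1 (g' b)) <= (Rabs L + 1) * Rabs (a - b) /\
              Rabs (c2 (g' a) - c2 (g' b)) <= (Rabs L + 1) * Rabs (a - b) /\
              Rabs (c3 (g' a) - c3 (g' b)) <= (Rabs L + 1) * Rabs (a - b).
Proof. intros HL a b. assert (H : L * Rabs (a - b) <= (Rabs L + 1) * Rabs (a - b)).
{ pose proof (Rabs_pos (a - b)). pose proof (Rle_abs L). nra. }
pose proof (HL a b). pose proof (comp_le_norm1 (vsub (g' a) (g' b))).
pose proof (comp_le_norm2 (vsub (g' a) (g' b))). pose proof (comp_le_norm3 (vsub (g' a) (g' b))).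
rewrite c1_vsub in *; rewrite c2_vsub in *; rewrite c3_vsub in *. lra. Qed.

Lemma unif_comp u v e : norm (vsub u v) <= e ->
  Rabs (c1 u - c1 v) <= e /\ Rabs (c2 u - c2 v) <= e /\ Rabs (c3 u - c3 v) <= e.
Proof. intro H. pose proof (comp_le_norm1 (vsub u v)).
pose proof (comp_le_norm2 (vsub u v)). pose proof (comp_le_norm3 (vsub u v)).
rewrite c1_vsub in *; rewrite c2_vsub in *; rewrite c3_vsub in *. lra. Qed.

Lemma chain3 u v w z e m9 : Rabs (u - v) <= e -> Rabs (u - w) <= e -> Rabs (w - z) < m9 ->
  Rabs (v - z) < e + e + m9.
Proof. intros A1 A2 A3. unfold Rabs in *; repeat destruct Rcase_abs; lra. Qed.
Lemma chain2 u v w e : Rabs (u - v) <= e -> Rabs (u - w) <= e + Rabs (v - w).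
Proof. intros A1. unfold Rabs in *; repeat destruct Rcase_abs; lra. Qed.
Lemma final x y c0 r M : Rabs (x - c0) <= r * M -> Rabs (y - c0) <= r * M -> x * y <= 0 ->
  0 < Rabs c0 -> r * M <= Rabs c0 / 2 -> False.
Proof. intros Q1 Q2 Hs Hc HrM. revert Q1 Q2 Hc HrM. generalize (r * M). intros q Q1 Q2 Hc HrM.
unfold Rabs in *. repeat destruct Rcase_abs; nra. Qed.

Lemma side g g' L p xn yn X Y
 (Hgp : periodic1 g) (Hinj : injS1 g) (Hd : forall t, vderiv g t (g' t))
 (HL : forall a b, norm (vsub (g' a) (g' b)) <= L * Rabs (a - b))
 (Hp : forall n, (2 <= n)%nat -> in_P n (p n)) (Hconv : W1inf_conv p g)
 (Hx : convS1 xn X) (Hy : convS1 yn Y)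
 (Hc : forall n, (2 <= n)%nat -> exists b, p n b = p n (yn n) /\
        loc_extremum (fun u => sqnorm (vsub (p n (xn n)) (p n u))) b) :
 dot (vsub (g X) (g Y)) (g' Y) = 0.
Proof.
set (G := g' Y). set (D := vsub (g X) (g Y)). set (c0 := dot D G).
destruct (Req_dec c0 0) as [|Hc0]; auto. exfalso.
set (M := Rabs (c1 D) + Rabs (c2 D) + Rabs (c3 D) + Rabs (c1 G) + Rabs (c2 G) + Rabs (c3 G) + 3).
assert (HM : 3 <= M) by (unfold M; pose proof (Rabs_pos (c1 D)); pose proof (Rabs_pos (c2 D));
  pose proof (Rabs_pos (c3 D)); pose proof (Rabs_pos (c1 G)); pose proof (Rabs_pos (c2 G));
  pose proof (Rabs_pos (c3 G)); lra).
assert (Hc0p : 0 < Rabs c0) by (apply Rabs_pos_lt; auto).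
set (LL := Rabs L + 1). assert (HLL : 1 <= LL) by (unfold LL; pose proof (Rabs_pos L); lra).
set (r := Rmin 1 (Rabs c0 / (2 * M))).
assert (Hr0 : 0 < r) by (apply Rmin_pos; [lra|apply Rdiv_lt_0_compat; lra]).
assert (Hr1 : r <= 1) by apply Rmin_l.
assert (HrM : r * M <= Rabs c0 / 2).
{ assert (r <= Rabs c0 / (2 * M)) by apply Rmin_r.
  apply Rmult_le_compat_r with (r := M) in H; [|lra].
  replace (Rabs c0 / (2 * M) * M) with (Rabs c0 / 2) in H by (field; lra). exact H. }
destruct (g_cont g g' Hd X (r/4)) as [d1X [Hd1X C1X]]; [lra|].
destruct (g_cont g g' Hd Y (r/4)) as [d1Y [Hd1Y C1Y]]; [lra|].
assert (HrL : 0 < r / (4 * LL)) by (apply Rdiv_lt_0_compat; lra).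
set (del := Rmin (1/2) (Rmin d1Y (r / (4 * LL)))).
assert (Hdel0 : 0 < del) by (apply Rmin_pos; [lra|apply Rmin_pos; lra]).
assert (Hdel1 : del <= 1/2) by apply Rmin_l.
assert (Hdel2 : del <= d1Y) by (eapply Rle_trans; [apply Rmin_r|apply Rmin_l]).
assert (Hdel3 : del <= r / (4 * LL)) by (eapply Rle_trans; [apply Rmin_r|apply Rmin_r]).
assert (HLdel : LL * del <= r / 4).
{ apply Rmult_le_compat_l with (r := LL) in Hdel3; [|lra].
  replace (LL * (r / (4 * LL))) with (r/4) in Hdel3 by (field; lra). exact Hdel3. }
destruct (inv_cont g g' Y del Hd Hgp Hinj ltac:(lra)) as [m [Hm Hinv]].
destruct (g_cont g g' Hd Y (m/9)) as [dY [HdY CY]]; [lra|].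
set (eps := Rmin (r/4) (m/9)).
assert (He0 : 0 < eps) by (apply Rmin_pos; lra).
assert (He1 : eps <= r/4) by apply Rmin_l. assert (He2 : eps <= m/9) by apply Rmin_r.
destruct (Hconv eps He0) as [N1 HN1].
destruct (Hx d1X Hd1X) as [N2 HN2].
destruct (Hy dY HdY) as [N3 HN3].
destruct (archimed_cor1 _ HrL) as [N4 [HN4 HN4p]].
set (n := Nat.max 2 (Nat.max N1 (Nat.max N2 (Nat.max N3 N4)))).
assert (Hn2 : (2 <= n)%nat) by lia.
assert (HnN4 : / INR n <= / INR N4).
{ apply Rinv_le_contravar; [apply lt_0_INR; lia| apply le_INR; lia]. }
assert (HLn : LL * / INR n <= r / 4).
{ assert (/ INR n <= r / (4 * LL)) by lra.
  apply Rmult_le_compat_l with (r := LL) in H; [|lra].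
  replace (LL * (r / (4 * LL))) with (r/4) in H by (field; lra). exact H. }
destruct (HN1 n ltac:(lia)) as [Hunif [Z [HZ HZd]]].
destruct (HN2 n ltac:(lia)) as [k1 Hk1].
destruct (HN3 n ltac:(lia)) as [k2 Hk2].
destruct (Hc n Hn2) as [b [Eb Hext]].
pose proof (Hp n Hn2) as HPn. destruct HPn as [[Hpp _] _].
set (pn := p n) in *. set (c := pn (xn n)) in *.
assert (GX : Rabs (c1 (g (xn n)) - c1 (g X)) < r/4 /\ Rabs (c2 (g (xn n)) - c2 (g X)) < r/4 /\
             Rabs (c3 (g (xn n)) - c3 (g X)) < r/4).
{ rewrite <- (periodic_Z g Hgp (xn n) (- k1)). apply C1X. rewrite opp_IZR.
  replace (xn n + - IZR k1 - X) with (xn n - X - IZR k1) by ring. exact Hk1. }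
assert (GY : Rabs (c1 (g (yn n)) - c1 (g Y)) < m/9 /\ Rabs (c2 (g (yn n)) - c2 (g Y)) < m/9 /\
             Rabs (c3 (g (yn n)) - c3 (g Y)) < m/9).
{ rewrite <- (periodic_Z g Hgp (yn n) (- k2)). apply CY. rewrite opp_IZR.
  replace (yn n + - IZR k2 - Y) with (yn n - Y - IZR k2) by ring. exact Hk2. }
destruct (unif_comp _ _ _ (Hunif b)) as [Ub1 [Ub2 Ub3]].
destruct (unif_comp _ _ _ (Hunif (yn n))) as [Uy1 [Uy2 Uy3]].
destruct (unif_comp _ _ _ (Hunif (xn n))) as [Ux1 [Ux2 Ux3]].
fold pn in Ub1, Ub2, Ub3, Uy1, Uy2, Uy3, Ux1, Ux2, Ux3. fold c in Ux1, Ux2, Ux3.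
rewrite Eb in Ub1, Ub2, Ub3.
assert (Hphi : phi g Y b < m).
{ assert (eps + eps + m/9 <= m/3) by lra. clear -H Ub1 Ub2 Ub3 Uy1 Uy2 Uy3 GY. unfold phi.
destruct GY as [Y1 [Y2 Y3]].
  pose proof (chain3 _ _ _ _ _ _ Ub1 Uy1 Y1). pose proof (chain3 _ _ _ _ _ _ Ub2 Uy2 Y2).
  pose proof (chain3 _ _ _ _ _ _ Ub3 Uy3 Y3). lra. }
destruct (Hinv b Hphi) as [k Hk].
set (b' := b + IZR k).
assert (Epb : pn b' = pn b) by (apply periodic_Z; auto).
assert (Egb : g b' = g b) by (apply periodic_Z; auto).
assert (Hext' : loc_extremum (fun u => sqnorm (vsub c (pn u))) b') by (apply ext_shift; auto).
destruct (geom n pn b' (Hp n Hn2)) as [h [ep [em [Hh0 [Hhn [Hr Hl]]]]]].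
pose proof (sign_lemma pn c b' h ep em Hh0 Hr Hl Hext') as Hsign.
set (d := vsub c (pn b')) in Hsign.
assert (GB : Rabs (c1 (g b') - c1 (g Y)) < r/4 /\ Rabs (c2 (g b') - c2 (g Y)) < r/4 /\
             Rabs (c3 (g b') - c3 (g Y)) < r/4) by (apply C1Y; unfold b'; lra).
rewrite Egb in GB.
assert (Dclose : Rabs (c1 d - c1 D) <= r /\ Rabs (c2 d - c2 D) <= r /\ Rabs (c3 d - c3 D) <= r).
{ unfold d, D. rewrite !c1_vsub, !c2_vsub, !c3_vsub. rewrite Epb.
  rewrite <- Eb in Ub1, Ub2, Ub3.
  destruct GX as [X1 [X2 X3]]. destruct GB as [B1 [B2 B3]].
  repeat split; [
  replace (c1 c - c1 (pn b) - (c1 (g X) - c1 (g Y))) with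
    ((c1 c - c1 (g (xn n))) + (c1 (g (xn n)) - c1 (g X)) + (- (c1 (pn b) - c1 (g b))) + (- (c1 (g b) - c1 (g Y)))) by ring
  | replace (c2 c - c2 (pn b) - (c2 (g X) - c2 (g Y))) with
    ((c2 c - c2 (g (xn n))) + (c2 (g (xn n)) - c2 (g X)) + (- (c2 (pn b) - c2 (g b))) + (- (c2 (g b) - c2 (g Y)))) by ring
  | replace (c3 c - c3 (pn b) - (c3 (g X) - c3 (g Y))) with
    ((c3 c - c3 (g (xn n))) + (c3 (g (xn n)) - c3 (g X)) + (- (c3 (pn b) - c3 (g b))) + (- (c3 (g b) - c3 (g Y)))) by ring];
  (eapply Rle_trans; [apply abs_tri4; try rewrite Rabs_Ropp; try eassumption; left; eassumption|]); lra. }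
assert (Eclose : forall tau e, Rabs (tau - Y) < h + del -> ~ Z tau -> (forall a, vderiv pn tau a -> a = e) ->
   Rabs (c1 e - c1 G) <= r /\ Rabs (c2 e - c2 G) <= r /\ Rabs (c3 e - c3 G) <= r).
{ intros tau e Htau HnZ He. destruct (HZd tau HnZ) as [a [a' [Ha [Ha' Hn]]]].
  apply He in Ha. subst a. assert (a' = g' tau) by (eapply vderiv_unique; eauto). subst a'.
  destruct (unif_comp _ _ _ Hn) as [E1 [E2 E3]].
  destruct (lip_comp g' L HL tau Y) as [L1 [L2 L3]]. fold LL G in L1, L2, L3.
  assert (LL * Rabs (tau - Y) <= r/2).
  { apply Rle_trans with (LL * (/ INR n + del)); [apply Rmult_le_compat_l; lra|]. lra. }
  repeat split; (eapply Rle_trans; [eapply chain2; eassumption|]); lra. }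
destruct (nonnull_pt Z b' (b' + h) HZ ltac:(lra)) as [tp [Htp HtpZ]].
destruct (nonnull_pt Z (b' - h) b' HZ ltac:(lra)) as [tm [Htm HtmZ]].
assert (Ep : Rabs (c1 ep - c1 G) <= r /\ Rabs (c2 ep - c2 G) <= r /\ Rabs (c3 ep - c3 G) <= r).
{ apply (Eclose tp); auto.
  - apply Rabs_def1; apply Rabs_def2 in Hk; unfold b' in *; lra.
  - intros a Ha. apply (vderiv_affine pn tp b' (b' + h) (pn b') b' ep a); auto.
    intros y Hy0. apply Hr; lra. }
assert (Em : Rabs (c1 em - c1 G) <= r /\ Rabs (c2 em - c2 G) <= r /\ Rabs (c3 em - c3 G) <= r).
{ apply (Eclose tm); auto.
  - apply Rabs_def1; apply Rabs_def2 in Hk; unfold b' in *; lra.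
  - intros a Ha. apply (vderiv_affine pn tm (b' - h) b' (pn b') b' em a); auto.
    intros y Hy0. rewrite Hl by lra. apply R3_eq; unfold vadd, vsub, vscale, c1, c2, c3; simpl; ring. }
destruct Dclose as [D1 [D2 D3]]. destruct Ep as [P1 [P2 P3]]. destruct Em as [M1 [M2 M3]].
pose proof (dot_close d ep D G r ltac:(lra) D1 D2 D3 P1 P2 P3) as Q1.
pose proof (dot_close d em D G r ltac:(lra) D1 D2 D3 M1 M2 M3) as Q2.
fold M c0 in Q1, Q2.
exact (final _ _ _ _ _ Q1 Q2 Hsign Hc0p HrM).
Qed.

Lemma loc_ext_eq f f' x : (forall u, f u = f' u) -> loc_extremum f x -> loc_extremum f' x.
Proof. intros E [d [Hd H]]. exists d; split; auto.
destruct H as [H|H]; [left|right]; intros u Hu; rewrite <- !E; auto. Qed.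

Lemma sqnorm_sym a b : sqnorm (vsub a b) = sqnorm (vsub b a).
Proof. unfold sqnorm, dot, vsub, c1, c2, c3; simpl; ring. Qed.

Theorem lemma13 (K : (R3 -> Prop) -> Prop) (HK : tame_knot_class K)
  (g : R -> R3) (Hg : in_CK K g) (Hreg : C11 g)
  (p : nat -> R -> R3) (Hp : forall n, (2 <= n)%nat -> in_P n (p n))
  (Hconv : W1inf_conv p g)
  (sn tn : nat -> R) (s t : R)
  (Hneq : forall n, (2 <= n)%nat -> ~ eqS1 (sn n) (tn n))
  (Hs : convS1 sn s) (Ht : convS1 tn t) (Hst : ~ eqS1 s t)
  (Hcrit : forall n, (2 <= n)%nat -> dcrit_P (p n) (p n (sn n)) (p n (tn n))) :
  dcrit_C1 g (g s) (g t).
Proof.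
destruct Hg as [[Hgp _] [Hinj _]]. destruct Hreg as [g' [Hd [L HL]]].
assert (S1 : dot (vsub (g s) (g t)) (g' t) = 0).
{ apply (side g g' L p sn tn s t Hgp Hinj Hd HL Hp Hconv Hs Ht).
  intros n Hn. destruct (Hcrit n Hn) as [_ [t0 [s0 [E1 [E2 [X1 X2]]]]]].
  exists s0. split; [auto|]. rewrite E1; exact X1. }
assert (S2 : dot (vsub (g t) (g s)) (g' s) = 0).
{ apply (side g g' L p tn sn t s Hgp Hinj Hd HL Hp Hconv Ht Hs).
  intros n Hn. destruct (Hcrit n Hn) as [_ [t0 [s0 [E1 [E2 [X1 X2]]]]]].
  exists t0. split; [auto|]. eapply loc_ext_eq; [|exact X2].
  intro u. simpl. rewrite E2. apply sqnorm_sym. }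
exists s, t, (g' s), (g' t). split; [auto|]. split; [auto|]. split.
{ intro E. apply Hst. apply Hinj; exact E. }
split; [auto|]. split; [auto|]. split.
- revert S2. unfold dot, vsub, c1, c2, c3; simpl. intro. lra.
- revert S1. unfold dot, vsub, c1, c2, c3; simpl. intro. lra.
Qed.
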